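(* Let $|s_0\rangle=|0\rangle$, $|s_1\rangle=-\tfrac12|0\rangle-\tfrac{\sqrt3}{2}|1\rangle$, $|s_2\rangle=-\tfrac12|0\rangle+\tfrac{\sqrt3}{2}|1\rangle$ and $|\psi_i\rangle=|s_i\rangle\otimes|s_i\rangle$ for $i=0,1,2$, each with prior $1/3$. For unambiguous discrimination of this ensemble, the maximum conclusive success probability is $3/4$ over all POVMs, $1/2$ over separable POVMs, and $1/2$ over LOCC measurements (attained by an LOCC protocol).
   Context: An unambiguous-discrimination POVM for $\{|\psi_i\rangle\}_{i=0}^2$ is a POVM $\{\Pi_0,\Pi_1,\Pi_2,\Pi_?\}$ with $\langle\psi_j|\Pi_i|\psi_j\rangle=0$ for all $i\ne j$ in $\{0,1,2\}$; its conclusive success probability is $\tfrac13\sum_{i=0}^2\langle\psi_i|\Pi_i|\psi_i\rangle$. A POVM is separable if each of its elements is a nonnegative combination of product projectors $|a\rangle\langle a|\otimes|b\rangle\langle b|$. LOCC means measurements implementable by local operations on each qubit and classical communication. *)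

(* Defs.v *)
From HB Require Import structures.
From mathcomp Require Import all_boot all_order all_algebra.
Set Implicit Arguments. Unset Strict Implicit. Unset Printing Implicit Defensive.
Import Order.TTheory GRing.Theory Num.Theory.
Local Open Scope ring_scope.

Section QDefs.
Variable C : numClosedFieldType.

(* inverse of mxvec_index: splits an index of C^(m*n) = C^m (x) C^n *)
Definition pidx (m n : nat) (k : 'I_(m * n)) : 'I_m * 'I_n :=
  enum_val (cast_ord (esym (mxvec_cast m n)) k).

Definition kron (m1 n1 m2 n2 : nat) (A : 'M[C]_(m1, n1)) (B : 'M[C]_(m2, n2))
  : 'M[C]_(m1 * m2, n1 * n2) :=
  \matrix_(i, j) (A (pidx i).1 (pidx j).1 * B (pidx i).2 (pidx j).2).

Definition adjm (m n : nat) (A : 'M[C]_(m, n)) : 'M[C]_(n, m) :=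
  (map_mx Num.conj A)^T.

Definition psd (n : nat) (A : 'M[C]_n) : Prop :=
  forall v : 'cV[C]_n, 0 <= (adjm v *m A *m v) 0 0.

Definition expval (n : nat) (A : 'M[C]_n) (u : 'cV[C]_n) : C :=
  (adjm u *m A *m u) 0 0.

(* POVM with outcomes 0,1,2 (conclusive) and 3 (= "?") on C^2 (x) C^2 *)
Definition is_POVM (P : 'I_4 -> 'M[C]_(2 * 2)) : Prop :=
  (forall i, psd (P i)) /\ \sum_(i < 4) P i = 1%:M.

Definition s_vec (i : 'I_3) : 'cV[C]_2 :=
  if val i == 0%N then \col_(k < 2) (if val k == 0%N then 1 else 0)
  else if val i == 1%N then
    \col_(k < 2) (if val k == 0%N then - 2^-1 else - (sqrtC (3 : C)) / 2)
  else
    \col_(k < 2) (if val k == 0%N then - 2^-1 else (sqrtC (3 : C)) / 2).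

Definition psi (i : 'I_3) : 'cV[C]_(2 * 2) := kron (s_vec i) (s_vec i).

Definition unambiguous (P : 'I_4 -> 'M[C]_(2 * 2)) : Prop :=
  forall (i j : 'I_3), i != j -> expval (P (widen_ord (leqnSn 3) i)) (psi j) = 0.

Definition success (P : 'I_4 -> 'M[C]_(2 * 2)) : C :=
  3^-1 * \sum_(i < 3) expval (P (widen_ord (leqnSn 3) i)) (psi i).

Definition sep_elem (A : 'M[C]_(2 * 2)) : Prop :=
  exists (N : nat) (c : 'I_N -> C) (a b : 'I_N -> 'cV[C]_2),
    (forall k, 0 <= c k) /\
    (forall k, adjm (a k) *m a k = 1%:M /\ adjm (b k) *m b k = 1%:M) /\
    A = \sum_(k < N) c k *: kron (a k *m adjm (a k)) (b k *m adjm (b k)).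

Definition is_sep_POVM (P : 'I_4 -> 'M[C]_(2 * 2)) : Prop :=
  is_POVM P /\ forall i, sep_elem (P i).

(* The state space is C^dA (x) C^dB; at a node
   one party (A or B) applies a local instrument with Kraus operators
   K j : C^d -> C^(d' j) (output dimension may change, allowing ancillas and
   discarding), the outcome j is broadcast and the protocol continues with
   the subprotocol ch j. *)
Inductive locc : nat -> nat -> Type :=
| LLeaf : forall dA dB, 'I_4 -> locc dA dB
| LNodeA : forall dA dB (m : nat) (d : 'I_m -> nat),
    (forall j, 'M[C]_(d j, dA)) -> (forall j, locc (d j) dB) -> locc dA dB
| LNodeB : forall dA dB (m : nat) (d : 'I_m -> nat),
    (forall j, 'M[C]_(d j, dB)) -> (forall j, locc dA (d j)) -> locc dA dB.

Fixpoint locc_wf dA dB (p : locc dA dB) : Prop :=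
  match p with
  | LLeaf _ _ _ => True
  | LNodeA dA dB m d K ch =>
      \sum_(j < m) adjm (K j) *m K j = 1%:M /\ forall j, locc_wf (ch j)
  | LNodeB dA dB m d K ch =>
      \sum_(j < m) adjm (K j) *m K j = 1%:M /\ forall j, locc_wf (ch j)
  end.

Fixpoint locc_eff dA dB (p : locc dA dB) (o : 'I_4) : 'M[C]_(dA * dB) :=
  match p with
  | LLeaf dA dB l => if l == o then 1%:M else 0
  | LNodeA dA dB m d K ch =>
      \sum_(j < m) (adjm (kron (K j) (1%:M : 'M[C]_dB))
                    *m locc_eff (ch j) o *m kron (K j) (1%:M : 'M[C]_dB))
  | LNodeB dA dB m d K ch =>
      \sum_(j < m) (adjm (kron (1%:M : 'M[C]_dA) (K j))
                    *m locc_eff (ch j) o *m kron (1%:M : 'M[C]_dA) (K j))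
  end.

Definition is_LOCC_POVM (P : 'I_4 -> 'M[C]_(2 * 2)) : Prop :=
  exists p : locc 2 2, locc_wf p /\ forall o, P o = locc_eff p o.

End QDefs.

(* Main.v *)
Require Import Defs.
From HB Require Import structures.
From mathcomp Require Import all_boot all_order all_algebra.
From mathcomp Require Import ring lra.
Import Order.TTheory GRing.Theory Num.Theory.
Local Open Scope ring_scope.
Set Implicit Arguments. Unset Strict Implicit. Unset Printing Implicit Defensive.

Section K.
Variable C : numClosedFieldType.

Lemma pidxK m n (i : 'I_m) (j : 'I_n) : pidx (mxvec_index i j) = (i, j).
Proof. by rewrite /pidx /mxvec_index cast_ordK enum_rankK. Qed.

Lemma sum_pidx m n (F : 'I_m * 'I_n -> C) :
  \sum_(k < m * n) F (pidx k) = \sum_(i < m) \sum_(j < n) F (i, j).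
Proof.
rewrite (reindex _ (curry_mxvec_bij m n)) /= pair_big /=.
by apply: eq_bigr => -[i j] _; rewrite pidxK.
Qed.

Lemma kron_mul m1 n1 p1 m2 n2 p2 (A : 'M[C]_(m1, n1)) (B : 'M[C]_(m2, n2))
  (A' : 'M[C]_(n1, p1)) (B' : 'M[C]_(n2, p2)) :
  kron A B *m kron A' B' = kron (A *m A') (B *m B').
Proof.
apply/matrixP => i j; rewrite !mxE.
set F := (fun p : 'I_n1 * 'I_n2 => A (pidx i).1 p.1 * B (pidx i).2 p.2 *
   (A' p.1 (pidx j).1 * B' p.2 (pidx j).2)).
rewrite (eq_bigr (fun k => F (pidx k))); last by move=> k _; rewrite !mxE.
rewrite sum_pidx /F.

rewrite big_distrl /=; apply: eq_bigr => a _.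
rewrite big_distrr /=; apply: eq_bigr => b _.
by rewrite mulrACA.
Qed.

Lemma kron_eq0 m1 n1 m2 n2 (A : 'M[C]_(m1, n1)) : kron A (0 : 'M[C]_(m2,n2)) = 0.
Proof. by apply/matrixP => i j; rewrite !mxE mulr0. Qed.


Lemma adjm_mul m n p (A : 'M[C]_(m, n)) (B : 'M[C]_(n, p)) :
  adjm (A *m B) = adjm B *m adjm A.
Proof. by rewrite /adjm map_mxM trmx_mul. Qed.

Lemma adjmK m n (A : 'M[C]_(m, n)) : adjm (adjm A) = A.
Proof. by apply/matrixP => i j; rewrite !mxE conjCK. Qed.

Lemma adjmD m n (A B : 'M[C]_(m, n)) : adjm (A + B) = adjm A + adjm B.
Proof. by apply/matrixP => i j; rewrite !mxE rmorphD. Qed.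

Lemma adjmN m n (A : 'M[C]_(m, n)) : adjm (- A) = - adjm A.
Proof. by apply/matrixP => i j; rewrite !mxE rmorphN. Qed.

Lemma adjmB m n (A B : 'M[C]_(m, n)) : adjm (A - B) = adjm A - adjm B.
Proof. by rewrite adjmD adjmN. Qed.

Lemma adjmZ m n c (A : 'M[C]_(m, n)) : adjm (c *: A) = c^* *: adjm A.
Proof. by apply/matrixP => i j; rewrite !mxE rmorphM. Qed.

Lemma adjm0 m n : adjm (0 : 'M[C]_(m, n)) = 0.
Proof. by apply/matrixP => i j; rewrite !mxE rmorph0. Qed.

Lemma adjm_sum m n I (r : seq I) (P : pred I) (F : I -> 'M[C]_(m, n)) :
  adjm (\sum_(i <- r | P i) F i) = \sum_(i <- r | P i) adjm (F i).
Proof.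
elim/big_rec2: _ => [|i x y _ <-]; first exact: adjm0.
by rewrite adjmD.
Qed.

Lemma adjm1 n : adjm (1%:M : 'M[C]_n) = 1%:M.
Proof. by apply/matrixP => i j; rewrite !mxE rmorphMn rmorph1 eq_sym. Qed.

Lemma adjm_kron m1 n1 m2 n2 (A : 'M[C]_(m1, n1)) (B : 'M[C]_(m2, n2)) :
  adjm (kron A B) = kron (adjm A) (adjm B).
Proof. by apply/matrixP => i j; rewrite !mxE rmorphM. Qed.

Lemma kronDl m1 n1 m2 n2 (A A' : 'M[C]_(m1, n1)) (B : 'M[C]_(m2, n2)) :
  kron (A + A') B = kron A B + kron A' B.
Proof. by apply/matrixP => i j; rewrite !mxE mulrDl. Qed.

Lemma kronDr m1 n1 m2 n2 (A : 'M[C]_(m1, n1)) (B B' : 'M[C]_(m2, n2)) :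
  kron A (B + B') = kron A B + kron A B'.
Proof. by apply/matrixP => i j; rewrite !mxE mulrDr. Qed.

Lemma kronNl m1 n1 m2 n2 (A : 'M[C]_(m1, n1)) (B : 'M[C]_(m2, n2)) :
  kron (- A) B = - kron A B.
Proof. by apply/matrixP => i j; rewrite !mxE mulNr. Qed.

Lemma kronNr m1 n1 m2 n2 (A : 'M[C]_(m1, n1)) (B : 'M[C]_(m2, n2)) :
  kron A (- B) = - kron A B.
Proof. by apply/matrixP => i j; rewrite !mxE mulrN. Qed.

Lemma kronZl m1 n1 m2 n2 c (A : 'M[C]_(m1, n1)) (B : 'M[C]_(m2, n2)) :
  kron (c *: A) B = c *: kron A B.
Proof. by apply/matrixP => i j; rewrite !mxE mulrA. Qed.

Lemma kronZr m1 n1 m2 n2 c (A : 'M[C]_(m1, n1)) (B : 'M[C]_(m2, n2)) :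
  kron A (c *: B) = c *: kron A B.
Proof. by apply/matrixP => i j; rewrite !mxE mulrCA. Qed.

Lemma kron0l m1 n1 m2 n2 (B : 'M[C]_(m2, n2)) : kron (0 : 'M[C]_(m1, n1)) B = 0.
Proof. by apply/matrixP => i j; rewrite !mxE mul0r. Qed.

Lemma kron_suml m1 n1 m2 n2 I (r : seq I) (P : pred I) (F : I -> 'M[C]_(m1, n1))
  (B : 'M[C]_(m2, n2)) :
  kron (\sum_(i <- r | P i) F i) B = \sum_(i <- r | P i) kron (F i) B.
Proof.
elim/big_rec2: _ => [|i x y _ <-]; first exact: kron0l.
by rewrite kronDl.
Qed.

Lemma kron_sumr m1 n1 m2 n2 I (r : seq I) (P : pred I) (A : 'M[C]_(m1, n1))
  (F : I -> 'M[C]_(m2, n2)) :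
  kron A (\sum_(i <- r | P i) F i) = \sum_(i <- r | P i) kron A (F i).
Proof.
elim/big_rec2: _ => [|i x y _ <-]; first exact: kron_eq0.
by rewrite kronDr.
Qed.

Lemma pidx_inj m n : injective (@pidx m n).
Proof. by move=> i j /enum_val_inj /cast_ord_inj. Qed.

Lemma kron11 m n : kron (1%:M : 'M[C]_m) (1%:M : 'M[C]_n) = 1%:M.
Proof.
apply/matrixP => i j; rewrite !mxE.
have [->|ne] := eqVneq i j; first by rewrite !eqxx mulr1.
case: (eqVneq (pidx i).1 (pidx j).1) => e1; rewrite ?mul0r //.
case: (eqVneq (pidx i).2 (pidx j).2) => e2; rewrite ?mulr0 //.
have E : pidx i = pidx j by move: e1 e2; case: (pidx i) (pidx j) => ? ? [? ?] /= -> ->.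
by move: ne; rewrite (pidx_inj E) eqxx.
Qed.


Lemma mx11 (P Q : 'M[C]_1) : (P *m Q) 0 0 = P 0 0 * Q 0 0.
Proof. by rewrite mxE big_ord1. Qed.

Lemma adjm00 m (X : 'M[C]_(1, m)) (Y : 'M[C]_(m, 1)) :
  (adjm Y *m adjm X) 0 0 = ((X *m Y) 0 0)^*.
Proof. by rewrite -adjm_mul !mxE. Qed.

Lemma psd_rank1 n c (w : 'cV[C]_n) : 0 <= c -> psd (c *: (w *m adjm w)).
Proof.
move=> c0 v; rewrite -scalemxAr -scalemxAl mxE !mulmxA -[_ *m adjm w *m v]mulmxA mx11.
rewrite -{2}[v]adjmK adjm00.
exact: mulr_ge0 (mul_conjC_ge0 _).
Qed.

Lemma psd0 n : psd (0 : 'M[C]_n).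
Proof. by move=> v; rewrite mulmx0 mul0mx mxE. Qed.

Lemma psdD n (A B : 'M[C]_n) : psd A -> psd B -> psd (A + B).
Proof.
move=> hA hB v; rewrite mulmxDr mulmxDl mxE.
exact: addr_ge0 (hA v) (hB v).
Qed.

Lemma psd_sum n I (r : seq I) (P : pred I) (F : I -> 'M[C]_n) :
  (forall i, P i -> psd (F i)) -> psd (\sum_(i <- r | P i) F i).
Proof.
move=> h; elim/big_rec: _ => [|i x Pi hx]; first exact: psd0.
exact: psdD (h _ Pi) hx.
Qed.

Lemma psd_congr n m (A : 'M[C]_n) (K : 'M[C]_(n, m)) :
  psd A -> psd (adjm K *m A *m K).
Proof.
move=> hA v; have := hA (K *m v).
by rewrite adjm_mul !mulmxA.
Qed.

Lemma expval_ge0 n (A : 'M[C]_n) u : psd A -> 0 <= expval A u.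
Proof. by move=> h; apply: h. Qed.

Lemma expvalD n (A B : 'M[C]_n) u : expval (A + B) u = expval A u + expval B u.
Proof. by rewrite /expval mulmxDr mulmxDl mxE. Qed.

Lemma expvalZ n c (A : 'M[C]_n) u : expval (c *: A) u = c * expval A u.
Proof. by rewrite /expval -scalemxAr -scalemxAl mxE. Qed.

Lemma expval0 n (u : 'cV[C]_n) : expval 0 u = 0.
Proof. by rewrite /expval mulmx0 mul0mx mxE. Qed.

Lemma expval_sum n I (r : seq I) (P : pred I) (F : I -> 'M[C]_n) u :
  expval (\sum_(i <- r | P i) F i) u = \sum_(i <- r | P i) expval (F i) u.
Proof.
elim/big_rec2: _ => [|i x y _ <-]; first exact: expval0.
by rewrite expvalD.
Qed.

Lemma mxD00 (P Q : 'M[C]_1) : (P + Q) 0 0 = P 0 0 + Q 0 0.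
Proof. by rewrite mxE. Qed.
Lemma mxZ00 c (P : 'M[C]_1) : (c *: P) 0 0 = c * P 0 0.
Proof. by rewrite mxE. Qed.

Lemma real_aux (c z : C) : 0 <= c ->
  (forall s, s \is Num.real -> 0 <= c + s * z) -> z = 0.
Proof.
move=> c0 h.
have zr : z \is Num.real.
  have := h 1 (rpred1 _); rewrite mul1r => /ger0_real cz.
  by rewrite -(addKr c z) rpredD // rpredN ger0_real.
apply/eqP; apply: contraT => nz.
have sr : (- (c + 1) / z) \is Num.real.
  by rewrite rpredM ?rpredN ?rpredV // rpredD ?ger0_real.
have := h _ sr; rewrite divfK // opprD addrA subrr add0r.
by rewrite oppr_ge0 ler10.
Qed.

Lemma psd_zero n (A : 'M[C]_n) (u w : 'cV[C]_n) : psd A -> expval A u = 0 ->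
  (adjm w *m A *m u) 0 0 = 0 /\ (adjm u *m A *m w) 0 0 = 0.
Proof.
move=> hA e0.
set c := (adjm w *m A *m w) 0 0.
set x := (adjm w *m A *m u) 0 0.
set y := (adjm u *m A *m w) 0 0.
have key t : 0 <= c + t * x + t^* * y.
  have := hA (w + t *: u).
  rewrite adjmD adjmZ !mulmxDl !mulmxDr -!scalemxAl -!scalemxAr !mxD00 !mxZ00.
  rewrite -/c -/x -/y.
  have -> : (adjm u *m A *m u) 0 0 = 0 by exact: e0.
  by rewrite !mulr0 addr0.
have c0 : 0 <= c by have := key 0; rewrite rmorph0 !mul0r !addr0.
have h1 : x + y = 0.
  apply: (real_aux c0) => s sr.
  by have := key s; rewrite conj_Creal // -addrA -mulrDr.
have h2 : 'i * (x - y) = 0.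
  apply: (real_aux c0) => s sr.
  have := key ('i * s); rewrite rmorphM /= conjCi conj_Creal //.
  by rewrite -addrA; have -> : 'i * s * x + - 'i * s * y = s * ('i * (x - y)) by ring.
have h3 : x - y = 0.
  by move/eqP: h2; rewrite mulf_eq0 (negPf (neq0Ci _)) => /eqP.
have xy : x = y by apply/eqP; rewrite -subr_eq0 h3.
have : x + x = 0 by rewrite {2}xy.
rewrite -mulr2n -mulr_natr => /eqP; rewrite mulf_eq0 pnatr_eq0 orbF => /eqP x0.
by split; [|rewrite -xy].
Qed.


Definition ip n (u v : 'cV[C]_n) : C := (adjm u *m v) 0 0.

Definition v2 (a b : C) : 'cV[C]_2 := \col_(k < 2) (if val k == 0%N then a else b).

Lemma sum2 (F : 'I_2 -> C) : \sum_(k < 2) F k = F 0 + F 1.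
Proof. by rewrite big_ord_recl big_ord1; congr (_ + F _); apply: val_inj. Qed.

Lemma ip2 a b c d : ip (v2 a b) (v2 c d) = a^* * c + b^* * d.
Proof. by rewrite /ip mxE sum2 !mxE. Qed.

Definition r3 : C := sqrtC 3.
Lemma hr : r3 ^+ 2 = 3.
Proof. exact: sqrtCK. Qed.
Lemma rc : r3^* = r3.
Proof. by apply: geC0_conj; rewrite sqrtC_ge0 ler0n. Qed.

Definition tv (i : 'I_3) : 'cV[C]_2 :=
  if val i == 0%N then v2 0 1
  else if val i == 1%N then v2 (r3 / 2) (- 2^-1)
  else v2 (r3 / 2) (2^-1).

Lemma sv_v2 (i : 'I_3) : s_vec C i = if val i == 0%N then v2 1 0
  else if val i == 1%N then v2 (- 2^-1) (- r3 / 2) else v2 (- 2^-1) (r3 / 2).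
Proof. rewrite /s_vec /r3. reflexivity. Qed.

Ltac csimp := rewrite ?(rmorphM, rmorphN, rmorphD, rmorphB, fmorphV, rmorph_nat, rmorph1, rmorph0) /= ?rc.

Definition ns (x : C) := x^* * x.
Definition e0 := v2 1 0.
Definition e1 := v2 0 1.

Ltac c3 i := case: i => [[|[|[|//]]] ?].

Lemma ip_sv (i j : 'I_3) : ip (s_vec C i) (s_vec C j) = if i == j then 1 else - 2^-1.
Proof. c3 i; c3 j; rewrite !sv_v2 /= ip2; csimp; by field: hr. Qed.

Lemma ns_ts (k j : 'I_3) : ns (ip (tv k) (s_vec C j)) = if k == j then 0 else 3/4.
Proof. rewrite /ns; c3 k; c3 j; rewrite !sv_v2 /tv /= ip2; csimp; by field: hr. Qed.

Lemma ip_ts_neq0 (k j : 'I_3) : k != j -> ip (tv k) (s_vec C j) != 0.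
Proof.
move=> kj; apply/eqP => h; have := ns_ts k j; rewrite (negPf kj) /ns h mulr0.
by move/eqP; rewrite eq_sym mulf_eq0 invr_eq0 !pnatr_eq0.
Qed.

Lemma ip_tt (k : 'I_3) : ip (tv k) (tv k) = 1.
Proof. rewrite /tv; c3 k; rewrite /= ip2; csimp; by field: hr. Qed.

Lemma mxDE m n (M N : 'M[C]_(m, n)) a b : (M + N) a b = M a b + N a b.
Proof. by rewrite mxE. Qed.
Lemma mxZE m n c (M : 'M[C]_(m, n)) a b : (c *: M) a b = c * M a b.
Proof. by rewrite mxE. Qed.

Lemma rank1E n (u v : 'cV[C]_n) a b : (u *m adjm v) a b = u a 0 * (v b 0)^*.
Proof. by rewrite !mxE big_ord1 !mxE. Qed.

Lemma I_decomp (j : 'I_3) :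
  s_vec C j *m adjm (s_vec C j) + tv j *m adjm (tv j) = 1%:M.
Proof.
apply/matrixP => a b; rewrite mxDE !rank1E /tv !sv_v2.
c3 j; case: a => [[|[|//]] ?]; case: b => [[|[|//]] ?]; rewrite /= !mxE /=; csimp; by field: hr.
Qed.

Lemma trine : \sum_(k < 3) (2/3) *: (tv k *m adjm (tv k)) = 1%:M.
Proof.
apply/matrixP => a b; rewrite summxE !big_ord_recl big_ord0 !mxZE !rank1E /tv /=.
case: a => [[|[|//]] ?]; case: b => [[|[|//]] ?]; rewrite /= !mxE /=; csimp; by field: hr.
Qed.

Lemma F5 (i j k : 'I_3) : i != j -> j != k -> i != k ->
  3^-1 * (ns (ip (tv j) (s_vec C i)) * ns (ip (tv k) (s_vec C i))) =
  4^-1 * ns (ip (tv j) e0 * ip (tv k) e1 - ip (tv j) e1 * ip (tv k) e0).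
Proof.
rewrite /ns /e0 /e1 /tv; c3 i; c3 j; c3 k; move=> //= _ _ _; rewrite !sv_v2 /= !ip2; csimp; by field: hr.
Qed.

End K.


Ltac csimp := rewrite ?(rmorphM, rmorphN, rmorphD, rmorphB, fmorphV, rmorph_nat, rmorph1, rmorph0) /= ?rc.
Ltac c3 i := case: i => [[|[|[|//]]] ?].

Section L.
Variable C : numClosedFieldType.
Local Notation tv := (@tv C).
Local Notation ns := (@ns C).

Lemma pidx11 (k : 'I_(1 * 1)) : pidx k = (0, 0).
Proof. by case: (pidx k) => x y; rewrite [x]ord1 [y]ord1. Qed.

Lemma kron11E (X Y : 'M[C]_1) : (kron X Y) 0 0 = X 0 0 * Y 0 0.
Proof. by rewrite mxE !pidx11. Qed.

Lemma ip_kron m n (a c : 'cV[C]_m) (b d : 'cV[C]_n) :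
  ip (kron a b) (kron c d) = ip a c * ip b d.
Proof.
rewrite /ip (_ : adjm (kron a b) = kron (adjm a) (adjm b)); last exact: adjm_kron.
rewrite -kron11E; congr (fun_of_matrix _ 0 0); exact (kron_mul (adjm a) (adjm b) c d).
Qed.

Lemma expval_kron m n (A : 'M[C]_m) (B : 'M[C]_n) (u : 'cV[C]_m) (v : 'cV[C]_n) :
  expval (kron A B) (kron u v) = expval A u * expval B v.
Proof.
rewrite /expval (_ : adjm (kron u v) = kron (adjm u) (adjm v)); last exact: adjm_kron.
rewrite -kron11E; congr (fun_of_matrix _ 0 0).
exact (etrans (congr1 (mulmx^~ (kron u v)) (kron_mul (adjm u) (adjm v) A B))
  (kron_mul _ _ u v)).
Qed.

Lemma expval1 n (u : 'cV[C]_n) : expval 1%:M u = ip u u.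
Proof. by rewrite /expval mulmx1. Qed.

Lemma mxBE m n (M N : 'M[C]_(m, n)) a b : (M - N) a b = M a b - N a b.
Proof. by rewrite !mxE. Qed.

Lemma ipBr n (u v w : 'cV[C]_n) : ip u (v - w) = ip u v - ip u w.
Proof. by rewrite /ip mulmxBr mxBE. Qed.
Lemma ipBl n (u v w : 'cV[C]_n) : ip (v - w) u = ip v u - ip w u.
Proof. by rewrite /ip adjmB mulmxBl mxBE. Qed.

Lemma ip_conj n (v w : 'cV[C]_n) : ip v w = (ip w v)^*.
Proof. by rewrite /ip -adjm00 adjmK. Qed.

Lemma expval_rank1 n c (w v : 'cV[C]_n) :
  expval (c *: (w *m adjm w)) v = c * ns (ip w v).
Proof.
rewrite /expval -scalemxAr -scalemxAl mxZE !mulmxA -[_ *m adjm w *m v]mulmxA mx11.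
by rewrite -/(ip v w) -/(ip w v) ip_conj.
Qed.

Lemma expval_cross n (P : 'M[C]_n) u v : expval P (u - v) =
  expval P u - (adjm u *m P *m v) 0 0 - (adjm v *m P *m u) 0 0 + expval P v.
Proof.
rewrite /expval adjmB !mulmxBl !mulmxBr !mxBE.
by rewrite opprB addrA addrAC (addrAC _ _ (- _)).
Qed.


Lemma adjm_delta n (i : 'I_n) : adjm (delta_mx i 0 : 'cV[C]_n) = delta_mx 0 i.
Proof.
apply/matrixP => a b; rewrite !mxE [a]ord1 eqxx andbT.
by case: (b == i); rewrite ?rmorph1 ?rmorph0.
Qed.

Lemma psd_kill n (A : 'M[C]_n) (u : 'cV[C]_n) : psd A -> expval A u = 0 ->
  A *m u = 0 /\ adjm u *m A = 0.
Proof.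
move=> hA hu; split; apply/matrixP => i j; rewrite [RHS]mxE.
- have [h _] := psd_zero (delta_mx i 0) hA hu.
  by rewrite [j]ord1 -h adjm_delta -mulmxA -rowE [RHS]mxE.
- have [_ h] := psd_zero (delta_mx j 0) hA hu.
  by rewrite [i]ord1 -h -colE [RHS]mxE.
Qed.

Lemma L1 (A : 'M[C]_2) (j : 'I_3) : psd A -> expval A (s_vec C j) = 0 ->
  A = expval A (tv j) *: (tv j *m adjm (tv j)).
Proof.
move=> hA hs; have [As sA] := psd_kill hA hs.
have E1 : A = A *m tv j *m adjm (tv j).
  by rewrite -{1}[A]mulmx1 -(I_decomp C j) mulmxDr !mulmxA As mul0mx add0r.
rewrite {1}E1 -{1}[A]mul1mx -(I_decomp C j) !mulmxDl -!mulmxA.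
rewrite (mulmxA (adjm (s_vec C j)) A) sA !mul0mx mulmx0 add0r.
rewrite (mulmxA A) (mulmxA (adjm (tv j))) (mulmxA (adjm (tv j))).
rewrite (mx11_scalar (adjm (tv j) *m A *m tv j)) mul_scalar_mx -scalemxAr.
by [].
Qed.

Lemma kron_rank1 m n (a : 'cV[C]_m) (b : 'cV[C]_n) :
  kron (a *m adjm a) (b *m adjm b) = (kron a b) *m adjm (kron a b).
Proof.
rewrite (_ : adjm (kron a b) = kron (adjm a) (adjm b)); last exact: adjm_kron.
exact (esym (kron_mul a b (adjm a) (adjm b))).
Qed.

Definition sig : 'cV[C]_(2 * 2) := kron (e0 C) (e1 C) - kron (e1 C) (e0 C).

Lemma ip_sig (a b : 'cV[C]_2) :
  ip (kron a b) sig = ip a (e0 C) * ip b (e1 C) - ip a (e1 C) * ip b (e0 C).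
Proof. by rewrite /sig ipBr !ip_kron. Qed.

Lemma ip_sig_sig : ip sig sig = 2.
Proof.
rewrite /sig !ipBl !ipBr !ip_kron /e0 /e1 !ip2; csimp; ring.
Qed.


Lemma TLmain (A B : 'M[C]_2) (i j k : 'I_3) a b :
  i != j -> j != k -> i != k -> 0 <= a -> 0 <= b ->
  A = a *: (tv j *m adjm (tv j)) -> B = b *: (tv k *m adjm (tv k)) ->
  3^-1 * (expval A (s_vec C i) * expval B (s_vec C i)) <= 4^-1 * expval (kron A B) sig.
Proof.
move=> ij jk ik a0 b0 -> ->.
rewrite !expval_rank1 kronZl kronZr scalerA kron_rank1 expval_rank1 ip_sig.
have E := @F5 C i j k ij jk ik.
set X := ns _ in E *; set Y := ns _ in E *; set Z := ns _ in E *.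
rewrite (_ : 3^-1 * (a * X * (b * Y)) = (a * b) * (3^-1 * (X * Y))); last by ring.
by rewrite E mulrCA lexx.
Qed.

Lemma n34 : (3 / 4 : C) != 0.
Proof. by rewrite mulf_eq0 invr_eq0 !pnatr_eq0. Qed.

Lemma TL (A B : 'M[C]_2) (i j k : 'I_3) :
  i != j -> j != k -> i != k -> psd A -> psd B ->
  expval A (s_vec C j) * expval B (s_vec C j) = 0 ->
  expval A (s_vec C k) * expval B (s_vec C k) = 0 ->
  3^-1 * (expval A (s_vec C i) * expval B (s_vec C i)) <= 4^-1 * expval (kron A B) sig.
Proof.
move=> ij jk ik hA hB /eqP; rewrite mulf_eq0 => /orP[/eqP Aj|/eqP Bj] /eqP;
  rewrite mulf_eq0 => /orP[/eqP Ak|/eqP Bk].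
- have EA := L1 hA Aj; move: Ak; rewrite EA expval_rank1 (@ns_ts C j k) (negPf jk).
  move/eqP; rewrite mulf_eq0 (negPf n34) orbF => /eqP ->.
  by rewrite scale0r kron0l !expval0 mul0r !mulr0 lexx.
- apply: (TLmain ij jk ik _ _ (L1 hA Aj) (L1 hB Bk)); exact: hA || exact: hB.
- rewrite eq_sym in jk.
  apply: (TLmain ik jk ij _ _ (L1 hA Ak) (L1 hB Bj)); exact: hA || exact: hB.
- have EB := L1 hB Bj; move: Bk; rewrite EB expval_rank1 (@ns_ts C j k) (negPf jk).
  move/eqP; rewrite mulf_eq0 (negPf n34) orbF => /eqP ->.
  by rewrite scale0r kron_eq0 !expval0 mulr0 !mulr0 lexx.
Qed.

End L.



Section M.
Variable C : numClosedFieldType.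
Local Notation tv := (@tv C).
Local Notation ns := (@ns C).
Local Notation sig := (@sig C).

Lemma sum_seq_eq0 (T : eqType) (s : seq T) (F : T -> C) :
  (forall x, x \in s -> 0 <= F x) -> \sum_(x <- s) F x = 0 ->
  forall x, x \in s -> F x = 0.
Proof.
elim: s => [|y s IH] h //=.
have hy : 0 <= F y by apply: h; rewrite inE eqxx.
have hs : 0 <= \sum_(x <- s) F x.
  by rewrite big_seq; apply: sumr_ge0 => x xs; apply: h; rewrite inE xs orbT.
rewrite big_cons => /eqP; rewrite paddr_eq0 // => /andP[/eqP Fy /eqP Fs] x.
rewrite inE => /orP[/eqP->//|xs]; apply: IH => // z zs.
by apply: h; rewrite inE zs orbT.
Qed.

Definition prodform (M : 'M[C]_(2 * 2)) := exists s : seq ('M[C]_2 * 'M[C]_2),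
  (forall x, x \in s -> psd x.1 /\ psd x.2) /\ M = \sum_(x <- s) kron x.1 x.2.

Lemma others (i : 'I_3) : exists j k : 'I_3, [/\ i != j, j != k & i != k].
Proof.
c3 i.
- by exists (@Ordinal 3 1 isT), (@Ordinal 3 2 isT).
- by exists (@Ordinal 3 0 isT), (@Ordinal 3 2 isT).
- by exists (@Ordinal 3 0 isT), (@Ordinal 3 1 isT).
Qed.

Lemma bound_half (P : 'I_4 -> 'M[C]_(2 * 2)) : is_POVM P -> unambiguous P ->
  (forall i : 'I_3, prodform (P (widen_ord (leqnSn 3) i))) -> success P <= 1 / 2.
Proof.
move=> [Ppsd Psum] Pu Pf.
have key : forall i : 'I_3, 3^-1 * expval (P (widen_ord (leqnSn 3) i)) (psi C i)
    <= 4^-1 * expval (P (widen_ord (leqnSn 3) i)) sig.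
  move=> i; have [s [hs Es]] := Pf i.
  have [j [k [ij jk ik]]] := others i.
  have zero l : i != l -> forall x, x \in s ->
      expval x.1 (s_vec C l) * expval x.2 (s_vec C l) = 0.
    move=> il; apply: sum_seq_eq0.
      by move=> x /hs [hA hB]; apply: mulr_ge0; [exact: hA | exact: hB].
    rewrite -[RHS](Pu i l il) Es expval_sum.
    by apply: eq_bigr => x _; rewrite /psi expval_kron.
  rewrite Es !expval_sum !big_distrr /= big_seq [X in _ <= X]big_seq.
  apply: ler_sum => x xs; have [hA hB] := hs x xs.
  rewrite /psi expval_kron.
  apply: TL ij jk ik hA hB (zero j ij x xs) (zero k ik x xs).
have tot : \sum_(i < 3) expval (P (widen_ord (leqnSn 3) i)) sig
    + expval (P ord_max) sig = 2.
  by rewrite -expval_sum -expvalD -big_ord_recr Psum expval1 ip_sig_sig.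
have e3 : 0 <= expval (P ord_max) sig by apply: Ppsd.
rewrite /success big_distrr /=.
apply: le_trans (ler_sum _ (fun i _ => key i)) _.
rewrite -big_distrr /=.
have -> : \sum_(i < 3) expval (P (widen_ord (leqnSn 3) i)) sig
    = 2 - expval (P ord_max) sig by rewrite -tot addrK.
rewrite (_ : 1 / 2 = 4^-1 * 2); last by field.
by rewrite ler_wpM2l ?invr_ge0 ?ler0n // gerBl.
Qed.

End M.


Section N.
Variable C : numClosedFieldType.

Lemma sep_prodform (M : 'M[C]_(2 * 2)) : sep_elem M -> prodform M.
Proof.
move=> [N [c [a [b [c0 [_ ->]]]]]].
exists [seq (c k *: (a k *m adjm (a k)), b k *m adjm (b k)) | k <- index_enum 'I_N].
split.
  move=> x /mapP [k _ ->] /=; split; first exact: psd_rank1.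
  by rewrite -[b k *m _]scale1r; apply: psd_rank1; rewrite ler01.
by rewrite big_map; apply: eq_bigr => k _; rewrite kronZl.
Qed.

Fixpoint lterms dA dB (p : locc C dA dB) (o : 'I_4) {struct p} :
  seq ('M[C]_dA * 'M[C]_dB) :=
  match p in locc _ a b return seq ('M[C]_a * 'M[C]_b) with
  | LLeaf _ _ l => if l == o then [:: (1%:M, 1%:M)] else [::]
  | LNodeA _ _ m d K ch =>
      flatten [seq [seq (adjm (K j) *m x.1 *m K j, x.2) | x <- lterms (ch j) o]
              | j <- index_enum 'I_m]
  | LNodeB _ _ m d K ch =>
      flatten [seq [seq (x.1, adjm (K j) *m x.2 *m K j) | x <- lterms (ch j) o]
              | j <- index_enum 'I_m]
  end.

Lemma psd1 n : psd (1%:M : 'M[C]_n).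
Proof.
move=> v; rewrite mulmx1 mxE; apply: sumr_ge0 => k _.
by rewrite !mxE mulrC mul_conjC_ge0.
Qed.

Lemma lterms_ok dA dB (p : locc C dA dB) o :
  locc_eff p o = \sum_(x <- lterms p o) kron x.1 x.2 /\
  (forall x, x \in lterms p o -> psd x.1 /\ psd x.2).
Proof.
elim: p => [a b l|a b m d K ch IH|a b m d K ch IH] /=.
- case: eqP => _; last by rewrite big_nil.
  rewrite big_cons big_nil addr0 kron11; split => // x; rewrite inE => /eqP -> /=.
  by split; apply: psd1.
- split.
    rewrite big_flatten big_map /=; apply: eq_bigr => j _.
    rewrite (IH j).1 mulmx_sumr mulmx_suml big_map; apply: eq_bigr => x _ /=.
    rewrite adjm_kron adjm1 !kron_mul mul1mx mulmx1 //.
  move=> x /flattenP [xs /mapP [j _ ->] /mapP [y yin ->]] /=.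
  have [h1 h2] := (IH j).2 y yin; split => //; exact: psd_congr.
- split.
    rewrite big_flatten big_map /=; apply: eq_bigr => j _.
    rewrite (IH j).1 mulmx_sumr mulmx_suml big_map; apply: eq_bigr => x _ /=.
    rewrite adjm_kron adjm1 !kron_mul mul1mx mulmx1 //.
  move=> x /flattenP [xs /mapP [j _ ->] /mapP [y yin ->]] /=.
  have [h1 h2] := (IH j).2 y yin; split => //; exact: psd_congr.
Qed.


Lemma locc_psd dA dB (p : locc C dA dB) o : psd (locc_eff p o).
Proof.
elim: p => [a b l|a b m d K ch IH|a b m d K ch IH] /=.
- by case: eqP => _; [apply: psd1 | apply: psd0].
- by apply: psd_sum => j _; apply: psd_congr.
- by apply: psd_sum => j _; apply: psd_congr.
Qed.

Lemma locc_sum dA dB (p : locc C dA dB) : locc_wf p ->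
  \sum_(o < 4) locc_eff p o = 1%:M.
Proof.
elim: p => [a b l|a b m d K ch IH|a b m d K ch IH] /=.
- move=> _; rewrite (bigD1 l) //= eqxx big1 ?addr0 // => o ol.
  by rewrite eq_sym (negPf ol).
- move=> [hK hch]; rewrite exchange_big /=.
  rewrite (eq_bigr (fun j => kron (adjm (K j) *m K j) (1%:M : 'M[C]_b))).
    by rewrite -kron_suml hK kron11.
  move=> j _; rewrite -mulmx_suml -mulmx_sumr (IH j (hch j)) mulmx1.
  by rewrite adjm_kron adjm1 kron_mul mulmx1.
- move=> [hK hch]; rewrite exchange_big /=.
  rewrite (eq_bigr (fun j => kron (1%:M : 'M[C]_a) (adjm (K j) *m K j))).
    by rewrite -kron_sumr hK kron11.
  move=> j _; rewrite -mulmx_suml -mulmx_sumr (IH j (hch j)) mulmx1.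
  by rewrite adjm_kron adjm1 kron_mul mulmx1.
Qed.

Lemma locc_povm (P : 'I_4 -> 'M[C]_(2 * 2)) : is_LOCC_POVM P ->
  is_POVM P /\ forall i, prodform (P i).
Proof.
move=> [p [wf hP]]; split.
  split; first by move=> i; rewrite hP; apply: locc_psd.
  by rewrite (eq_bigr _ (fun i _ => hP i)) locc_sum.
move=> i; have [E H] := lterms_ok p i.
by exists (lterms p i); split => //; rewrite hP.
Qed.

End N.



Section O.
Variable C : numClosedFieldType.

Lemma ip_psi (a b : 'I_3) : ip (psi C a) (psi C b) = if a == b then 1 else 4^-1.
Proof.
rewrite /psi ip_kron ip_sv; case: eqP => _; first by rewrite mulr1.
by field.
Qed.

Lemma bound_pair (P : 'I_4 -> 'M[C]_(2 * 2)) : is_POVM P -> unambiguous P ->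
  forall a b : 'I_3, a != b ->
  expval (P (widen_ord (leqnSn 3) a)) (psi C a) +
  expval (P (widen_ord (leqnSn 3) b)) (psi C b) <= 3 / 2.
Proof.
move=> [Ppsd Psum] Pu a b ab.
set W := fun i : 'I_3 => P (widen_ord (leqnSn 3) i).
set phi := psi C a - psi C b.
have hc (c : 'I_3) : expval (W c) phi =
   (if c == a then expval (W c) (psi C a) else 0) +
   (if c == b then expval (W c) (psi C b) else 0).
  rewrite /phi expval_cross.
  have [ca|ca] := eqVneq c a; have [cb|cb] := eqVneq c b.
  - by move: ab; rewrite -ca -cb eqxx.
  - have z := Pu c b cb; have [x1 x2] := psd_zero (psi C a) (Ppsd _) z.
    by rewrite /W z x1 x2 !subr0 addr0.
  - have z := Pu c a ca; have [x1 x2] := psd_zero (psi C b) (Ppsd _) z.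
    by rewrite /W z x1 x2 !subr0.
  - have za := Pu c a ca; have zb := Pu c b cb.
    have [x1 x2] := psd_zero (psi C b) (Ppsd _) za.
    by rewrite /W za zb x1 x2 !subr0 addr0.
have tot : \sum_(c < 3) expval (W c) phi + expval (P ord_max) phi = 3 / 2.
  rewrite -expval_sum -expvalD -big_ord_recr Psum expval1 /phi !ipBl !ipBr !ip_psi.
  rewrite !eqxx (negPf ab) eq_sym (negPf ab); by field.
rewrite (eq_bigr _ (fun c _ => hc c)) big_split /= -!big_mkcond !big_pred1_eq in tot.
have e3 : 0 <= expval (P ord_max) phi by apply: Ppsd.
by rewrite -tot lerDl.
Qed.


Lemma bound_34 (P : 'I_4 -> 'M[C]_(2 * 2)) : is_POVM P -> unambiguous P ->
  success P <= 3 / 4.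
Proof.
move=> hP hu; have h := bound_pair hP hu.
rewrite /success !big_ord_recl big_ord0 addr0.
have h01 := h ord0 (lift ord0 ord0) isT.
have h12 := h (lift ord0 ord0) (lift ord0 (lift ord0 ord0)) isT.
have h02 := h ord0 (lift ord0 (lift ord0 ord0)) isT.
set x := expval _ (psi C ord0) in h01 h02 *.
set y := expval _ (psi C (lift ord0 ord0)) in h01 h12 *.
set z := expval _ (psi C (lift ord0 (lift ord0 ord0))) in h12 h02 *.
have S := lerD (lerD h01 h12) h02.
rewrite (_ : 3^-1 * (x + (y + z)) = 6^-1 * ((x + y) + (y + z) + (x + z))); last by field.
rewrite (_ : 3 / 4 = 6^-1 * (3 / 2 + 3 / 2 + 3 / 2)); last by field.
by rewrite ler_wpM2l // invr_ge0 ler0n.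
Qed.

End O.



Section P.
Variable C : numClosedFieldType.
Local Notation tv := (@tv C).

Definition labn (k l : 'I_3) : nat := if k == l then 3%N else (3 - k - l)%N.

Lemma labn_lt (k l : 'I_3) : (labn k l < 4)%N.
Proof.
rewrite /labn; case: (k == l) => //.
by apply: leq_ltn_trans (leq_subr _ _) _; apply: leq_ltn_trans (leq_subr _ _) _.
Qed.

Lemma LAB (i j k l : 'I_3) : i != j -> labn k l = i -> (k == j) || (l == j).
Proof. rewrite /labn; c3 i; c3 j; c3 k; c3 l; rewrite -?val_eqE /=; by move=> ? /eqP. Qed.

Definition Pm (k : 'I_3) : 'M[C]_2 := tv k *m adjm (tv k).

Definition Psep (o : 'I_4) : 'M[C]_(2 * 2) :=
  \sum_(k < 3) \sum_(l < 3) (if labn k l == val o then 4/9 else 0) *: kron (Pm k) (Pm l).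

Lemma Psep_psd o : psd (Psep o).
Proof.
apply: psd_sum => k _; apply: psd_sum => l _.
rewrite /Pm kron_rank1; apply: psd_rank1.
by case: ifP => _ //; rewrite divr_ge0 ?ler0n.
Qed.

Lemma sum_ind (m : nat) (c : C) : (m < 4)%N ->
  \sum_(o < 4) (if m == val o then c else 0) = c.
Proof.
move=> h; rewrite (bigD1 (Ordinal h)) //= eqxx big1 ?addr0 // => o.
by rewrite -val_eqE /= eq_sym => /negPf ->.
Qed.

Lemma Psep_sum : \sum_(o < 4) Psep o = 1%:M.
Proof.
rewrite /Psep exchange_big /=.
rewrite (eq_bigr (fun k => \sum_(l < 3) (4/9) *: kron (Pm k) (Pm l))); last first.
  move=> k _; rewrite exchange_big /=; apply: eq_bigr => l _.
  by rewrite -scaler_suml sum_ind // labn_lt.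
rewrite -(kron11 C 2 2) -(trine C) kron_suml; apply: eq_bigr => k _.
rewrite kron_sumr; apply: eq_bigr => l _.
by rewrite kronZl kronZr scalerA /Pm; congr (_ *: _); field.
Qed.


Lemma expval_Pm k (u : 'cV[C]_2) : expval (Pm k) u = ns (ip (tv k) u).
Proof. by rewrite -[Pm k]scale1r expval_rank1 mul1r. Qed.

Lemma expval_Psep o (j : 'I_3) : expval (Psep o) (psi C j) =
  \sum_(k < 3) \sum_(l < 3) (if labn k l == val o then 4/9 else 0) *
     ((if k == j then 0 else 3/4) * (if l == j then 0 else 3/4)).
Proof.
rewrite expval_sum; apply: eq_bigr => k _; rewrite expval_sum; apply: eq_bigr => l _.
by rewrite expvalZ /psi expval_kron !expval_Pm !ns_ts.
Qed.

Lemma Psep_unamb : unambiguous Psep.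
Proof.
move=> i j ij; rewrite expval_Psep big1 // => k _; rewrite big1 // => l _.
case: eqP => [/= h|]; last by rewrite mul0r.
by case/orP: (LAB ij h) => /eqP ->; rewrite eqxx ?mul0r ?mulr0.
Qed.

Lemma Psep_succ (i : 'I_3) :
  expval (Psep (widen_ord (leqnSn 3) i)) (psi C i) = 1 / 2.
Proof.
rewrite expval_Psep /= !big_ord_recl !big_ord0 !addr0 /labn.
by c3 i; rewrite /=; field.
Qed.

Lemma Psep_success : success Psep = 1 / 2.
Proof.
rewrite /success (eq_bigr _ (fun i _ => Psep_succ i)) sumr_const card_ord.
by rewrite -mulr_natr; field.
Qed.

Lemma sum_pidxG (V : nmodType) m n (F : 'I_m * 'I_n -> V) :
  \sum_(k < m * n) F (pidx k) = \sum_(i < m) \sum_(j < n) F (i, j).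
Proof.
rewrite (reindex _ (curry_mxvec_bij m n)) /= pair_big /=.
by apply: eq_bigr => -[i j] _; rewrite pidxK.
Qed.

Lemma tv_unit (k : 'I_3) : adjm (tv k) *m tv k = 1%:M.
Proof.
apply/matrixP => a b; rewrite [a]ord1 [b]ord1 -/(ip (tv k) (tv k)) ip_tt.
by rewrite mxE.
Qed.

Lemma Psep_sep o : sep_elem (Psep o).
Proof.
exists (3 * 3)%N, (fun n => if labn (pidx n).1 (pidx n).2 == val o then 4/9 else 0),
  (fun n => tv (pidx n).1), (fun n => tv (pidx n).2).
split; first by move=> n; case: ifP => _ //; rewrite divr_ge0 ?ler0n.
split; first by move=> n; rewrite !tv_unit.
rewrite (sum_pidxG (fun p => (if labn p.1 p.2 == val o then 4/9 else 0) *: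
   kron (tv p.1 *m adjm (tv p.1)) (tv p.2 *m adjm (tv p.2)))).
by [].
Qed.

End P.



Section Q.
Variable C : numClosedFieldType.
Local Notation tv := (@tv C).
Local Notation Pm := (@Pm C).

Definition qq : C := sqrtC (2 / 3).
Lemma qq2 : qq^* * qq = 2 / 3.
Proof.
rewrite geC0_conj ?sqrtC_ge0 ?divr_ge0 ?ler0n // -expr2 /qq sqrtCK //.
Qed.

Definition Kr (k : 'I_3) : 'M[C]_(1, 2) := qq *: adjm (tv k).

Lemma KrK k : adjm (Kr k) *m Kr k = (2 / 3) *: Pm k.
Proof. by rewrite /Kr adjmZ adjmK -scalemxAr -scalemxAl scalerA mulrC qq2. Qed.

Lemma Kr_sum : \sum_(k < 3) adjm (Kr k) *m Kr k = 1%:M.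
Proof. by rewrite -(trine C); apply: eq_bigr => k _; rewrite KrK. Qed.

Definition lab (k l : 'I_3) : 'I_4 := Ordinal (labn_lt k l).

Definition prot : locc C 2 2 :=
  @LNodeA C 2 2 3 (fun _ => 1%N) (fun k => Kr k)
    (fun k => @LNodeB C 1 2 3 (fun _ => 1%N) (fun l => Kr l)
       (fun l => @LLeaf C 1 1 (lab k l))).

Lemma prot_wf : locc_wf prot.
Proof. by split; [exact: Kr_sum | move=> k; split; [exact: Kr_sum | by []]]. Qed.

Lemma prot_eff o : locc_eff prot o = Psep C o.
Proof.
rewrite /= /Psep; apply: eq_bigr => k _.
rewrite mulmx_sumr mulmx_suml; apply: eq_bigr => l _.
have E : (if lab k l == o then 1%:M else 0 : 'M[C]_(1 * 1)) =
    (if labn k l == val o then 1 else 0) *: kron (1%:M : 'M[C]_1) (1%:M : 'M[C]_1).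
  by rewrite -val_eqE /=; case: ifP => _; rewrite ?scale1r ?scale0r ?kron11.
rewrite E -!scalemxAr -!scalemxAl -!scalemxAr.
rewrite !adjm_kron !adjm1 !kron_mul !mul1mx !mulmx1 !KrK -scalemxAl kron_mul mulmx1 KrK.
rewrite kronZl kronZr !scalerA; congr (_ *: _).
by case: ifP => _; field.
Qed.

Lemma Psep_locc : is_LOCC_POVM (Psep C).
Proof. by exists prot; split; [exact: prot_wf | move=> o; rewrite prot_eff]. Qed.

End Q.


Ltac c2 i := case: i => [[|[|//]] ?].

Section R.
Variable C : numClosedFieldType.
Local Notation r3 := (@r3 C).
Local Notation hr := (@hr C).

Definition g4 (x00 x01 x10 x11 : C) (a b : 'I_2) : C :=
  if val a == 0%N then (if val b == 0%N then x00 else x01)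
  else (if val b == 0%N then x10 else x11).

Definition v4 (f : 'I_2 -> 'I_2 -> C) : 'cV[C]_(2 * 2) :=
  \col_k f (pidx k).1 (pidx k).2.

Lemma v4E f a b : v4 f (mxvec_index a b) 0 = f a b.
Proof. by rewrite mxE pidxK. Qed.

Lemma mxvec_index_eq (a b c d : 'I_2) :
  (mxvec_index a b == mxvec_index c d) = (a == c) && (b == d).
Proof.
apply/eqP/andP => [h|[/eqP-> /eqP->]] //.
by have := congr1 (@pidx 2 2) h; rewrite !pidxK => -[-> ->].
Qed.

Lemma mx4P (M N : 'M[C]_(2 * 2)) :
  (forall a b c d : 'I_2, M (mxvec_index a b) (mxvec_index c d) =
                         N (mxvec_index a b) (mxvec_index c d)) -> M = N.
Proof.
move=> h; apply/matrixP => i j.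
by case/mxvec_indexP: i => a b; case/mxvec_indexP: j => c d; exact: h.
Qed.

Lemma ip_v4_psi f (j : 'I_3) : ip (v4 f) (psi C j) =
  \sum_(a < 2) \sum_(b < 2) (f a b)^* * (s_vec C j a 0 * s_vec C j b 0).
Proof.
rewrite /ip mxE.
pose F := fun p : 'I_2 * 'I_2 => (f p.1 p.2)^* * (s_vec C j p.1 0 * s_vec C j p.2 0).
transitivity (\sum_(k < 2 * 2) F (pidx k)); last exact: sum_pidx.
by apply: eq_bigr => k _; rewrite /F !mxE pidx11.
Qed.

Definition w0 := v4 (g4 3 0 0 (-1)).
Definition w1 := v4 (g4 0 r3 r3 2).
Definition w2 := v4 (g4 0 (- r3) (- r3) 2).
Definition wa := v4 (g4 1 0 0 1).
Definition wb := v4 (g4 0 1 (-1) 0).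

Definition wvn (n : nat) := if n == 0%N then w0 else if n == 1%N then w1 else w2.
Definition wv (i : 'I_3) := wvn (val i).

Lemma ip_wv (i j : 'I_3) : ip (wv i) (psi C j) = if i == j then 3 else 0.
Proof.
rewrite /wv /wvn; c3 i; c3 j; rewrite /= ip_v4_psi !sum2 /g4 !sv_v2 /= !mxE /=; csimp; by field: hr.
Qed.


Definition Popt (o : 'I_4) : 'M[C]_(2 * 2) :=
  if val o == 3%N then (1/4) *: (wa *m adjm wa) + (1/2) *: (wb *m adjm wb)
  else (1/12) *: (wvn o *m adjm (wvn o)).

Lemma Popt_psd o : psd (Popt o).
Proof.
rewrite /Popt; case: ifP => _.
  by apply: psdD; apply: psd_rank1; rewrite divr_ge0 ?ler0n.
by apply: psd_rank1; rewrite divr_ge0 ?ler0n.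
Qed.

Lemma Popt_sum : \sum_(o < 4) Popt o = 1%:M.
Proof.
rewrite !big_ord_recl big_ord0 addr0 /Popt /=.
apply: mx4P => a b c d.
rewrite !mxDE !mxZE !rank1E /wvn /= /w0 /w1 /w2 /wa /wb !v4E mxE mxvec_index_eq.
c2 a; c2 b; c2 c; c2 d; rewrite /g4 /=; csimp; by field: hr.
Qed.

Lemma Popt_w (i : 'I_3) : Popt (widen_ord (leqnSn 3) i) = (1/12) *: (wv i *m adjm (wv i)).
Proof. by rewrite /Popt /=; c3 i. Qed.

Lemma Popt_unamb : unambiguous Popt.
Proof.
move=> i j ij; rewrite Popt_w expval_rank1 -/(psi C j) ip_wv (negPf ij).
by rewrite /ns mulr0 mulr0.
Qed.

Lemma Popt_success : success Popt = 3 / 4.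
Proof.
rewrite /success (eq_bigr (fun _ => 3 / 4)); last first.
  by move=> i _; rewrite Popt_w expval_rank1 ip_wv eqxx /ns; csimp; field.
by rewrite sumr_const card_ord -mulr_natr; field.
Qed.

End R.


Unset Implicit Arguments.
Theorem mainTheorem17 (C : numClosedFieldType) :
  ((exists P : 'I_4 -> 'M[C]_(2 * 2),
      is_POVM P /\ unambiguous P /\ success P = 3 / 4) /\
   (forall P : 'I_4 -> 'M[C]_(2 * 2),
      is_POVM P -> unambiguous P -> success P <= 3 / 4)) /\
  ((exists P : 'I_4 -> 'M[C]_(2 * 2),
      is_sep_POVM P /\ unambiguous P /\ success P = 1 / 2) /\
   (forall P : 'I_4 -> 'M[C]_(2 * 2),
      is_sep_POVM P -> unambiguous P -> success P <= 1 / 2)) /\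
  ((exists P : 'I_4 -> 'M[C]_(2 * 2),
      is_LOCC_POVM P /\ unambiguous P /\ success P = 1 / 2) /\
   (forall P : 'I_4 -> 'M[C]_(2 * 2),
      is_LOCC_POVM P -> unambiguous P -> success P <= 1 / 2)).
Proof.
split; [split|split; split].
- exists (@Popt C); split; first by split; [exact: Popt_psd | exact: Popt_sum].
  by split; [exact: Popt_unamb | exact: Popt_success].
- by move=> P hP hu; apply: bound_34.
- exists (@Psep C); split.
    split; [by split; [exact: Psep_psd | exact: Psep_sum] | exact: Psep_sep].
  by split; [exact: Psep_unamb | exact: Psep_success].
- move=> P [hP hs] hu; apply: bound_half hP hu _ => i.
  by apply: sep_prodform; exact: hs.
- exists (@Psep C); split; first exact: Psep_locc.
  by split; [exact: Psep_unamb | exact: Psep_success].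
- move=> P hL hu; have [hP hpf] := locc_povm hL.
  exact: bound_half hP hu (fun i => hpf _).
Qed.
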